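(* Let $d\ge 1$ be an integer, let $P\subseteq \mathbb R\times[d]$, and let $\mathcal C_{\equiv}(P)$ be as in the context. For any finite family $\mathcal C\subseteq \mathcal C_{\equiv}(P)$, the nerve of $\mathcal C$ is $(2d-1)$-collapsible.
   Context: $[d]=\{1,\dots,d\}$. A (separated) $d$-interval is a set $I=\bigcup_{i\in[d]}\{(x,i)\in\mathbb R\times[d]: x\in I^{(i)}\}$, where each $I^{(i)}\subseteq\mathbb R$ is a convex set (possibly empty), called the $i$-th level of $I$. For $P\subseteq\mathbb R\times[d]$, $\mathcal C_{\equiv}(P)=\{I\cap P: I\subseteq\mathbb R\times[d]\text{ is a } d\text{-interval}\}$. For a family $\mathcal F=(C_i)_{i\in I}$ of sets indexed by a finite set $I$, its nerve is the abstract simplicial complex $K(\mathcal F)=\{J\subseteq I: \bigcap_{j\in J}C_j\neq\emptyset\}$. The dimension of a face $\alpha$ is $|\alpha|-1$. A face $\sigma$ of a simplicial complex $K$ is free if it is contained in a unique inclusion-maximal face of $K$. An elementary $d$-collapse removes from $K$ a free face $\sigma$ with $\dim\sigma\le d-1$ together with all faces containing it, giving $\mathrm{coll}(K,\sigma)=K\setminus\{\tau\in K:\sigma\subseteq\tau\}$. $K$ is $d$-collapsible if it can be reduced to the empty complex by a sequence of elementary $d$-collapses. *)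

(* Defs.v *)
From Stdlib Require Import Reals.
From mathcomp Require Import all_boot.
Set Implicit Arguments. Unset Strict Implicit. Unset Printing Implicit Defensive.

(* A point of R x [d]; the level set [d] = {1..d} is modelled by 'I_d = {0..d-1}. *)
Definition pt (d : nat) : Type := (R * 'I_d)%type.

Definition convex (S : R -> Prop) : Prop :=
  forall x y z, S x -> S y -> Rle x z -> Rle z y -> S z.

(* A (separated) d-interval given by its levels lvl i (each convex, possibly empty). *)
Definition d_interval_of (d : nat) (lvl : 'I_d -> R -> Prop) : pt d -> Prop :=
  fun p => lvl p.2 p.1.

Definition in_C_equiv (d : nat) (P : pt d -> Prop) (C : pt d -> Prop) : Prop :=
  exists lvl : 'I_d -> R -> Prop,
    (forall i, convex (lvl i)) /\
    (forall p, C p <-> (d_interval_of lvl p /\ P p)).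

Definition complex (I : finType) := {set I} -> Prop.

Definition nerve (I : finType) (X : Type) (C : I -> X -> Prop) : complex I :=
  fun J => exists x, forall j, j \in J -> C j x.

Definition maximal_face (I : finType) (K : complex I) (t : {set I}) : Prop :=
  K t /\ forall t', K t' -> t \subset t' -> t' = t.

Definition free_face (I : finType) (K : complex I) (s : {set I}) : Prop :=
  K s /\ exists t, [/\ maximal_face K t, s \subset t &
                      forall t', maximal_face K t' -> s \subset t' -> t' = t].

Definition coll (I : finType) (K : complex I) (s : {set I}) : complex I :=
  fun t => K t /\ ~ (s \subset t).

(* K is d-collapsible: reducible to the empty (void) complex by elementary
   d-collapses, i.e. removals of free faces sigma with dim sigma = |sigma|-1 <= d-1. *)
Inductive d_collapsible (I : finType) (d : nat) : complex I -> Prop :=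
| dcoll_empty (K : complex I) : (forall s, ~ K s) -> d_collapsible d K
| dcoll_step (K : complex I) (s : {set I}) :
    free_face K s -> #|s| <= d -> d_collapsible d (coll K s) -> d_collapsible d K.

(* Main.v *)
Require Import Defs.
From Stdlib Require Import Reals.
From Stdlib Require List.
From Stdlib Require Import ClassicalDescription Classical FunctionalExtensionality PropExtensionality IndefiniteDescription.
From mathcomp Require Import all_boot.
From mathcomp Require Import zify.
From Stdlib Require Import Lia.
Set Implicit Arguments. Unset Strict Implicit. Unset Printing Implicit Defensive.

Lemma cplx_eq (I : finType) (K K' : complex I) : (forall t, K t <-> K' t) -> K = K'.
Proof. move=> h; apply: functional_extensionality => t; apply: propositional_extensionality; exact: h. Qed.

Ltac bfin := intros; repeat match goal with
  | H : is_true true -> _ |- _ => specialize (H isT)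
  | H : is_true false |- _ => discriminate H
  | H : is_true false -> _ |- _ => clear H
  | H : is_true true |- _ => clear H
  end; done.
Ltac bdestr := repeat (match goal with |- context [?y \in ?S] => case: (y \in S) | |- context [?y == ?z] => case: (y == z) end); simpl; bfin.

Section Ok.
Variable I : finType.

Inductive ok (k : nat) (H : {set I} -> Prop) : {set I} -> {set I} -> Prop :=
| ok_void (r t : {set I}) : (exists A, H A /\ forall j, j \in A -> j \notin r :|: t) -> ok k H r t
| ok_none (r t : {set I}) : (forall A, H A -> exists j, j \in A /\ j \in r) -> #|r| <= k -> ok k H r t
| ok_split (r t : {set I}) (a : I) : a \in t -> a \notin r -> ok k H (a |: r) (t :\ a) -> ok k H r (t :\ a) -> ok k H r t.

Definition Rset (H : {set I} -> Prop) (r t : {set I}) (J : {set I}) : Prop :=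
  r \subset J /\ J \subset r :|: t /\ forall A, H A -> exists j, j \in A /\ j \in J.

Lemma lemG k H r t : ok k H r t -> forall K : complex I,
  (forall J, Rset H r t J -> K J) ->
  (forall J J' : {set I}, Rset H r t J -> J \subset J' -> K J' -> Rset H r t J') ->
  d_collapsible k (fun J => K J /\ ~ Rset H r t J) -> d_collapsible k K.
Proof.
elim=> {r t} [r t [A [HA hA]] | r t hA hk | r t a at_ ar _ IH1 _ IH2] K hRK hup hK.
- have -> : K = (fun J => K J /\ ~ Rset H r t J) => //.
  apply: cplx_eq => J; split=> [kj|[]//]; split=> // [[_ [sJ hm]]].
  case: (hm A HA) => j [jA jJ]; move: (hA j jA); by rewrite (subsetP sJ j jJ).
- have Rr : Rset H r t r.
    split; first exact: subxx. split; first exact: subsetUl. exact: hA.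
  have Rrt : Rset H r t (r :|: t).
    split; first exact: subsetUl. split; first exact: subxx.
    move=> A HA'; case: (hA A HA') => j [jA jr]; exists j; split=> //; by rewrite inE jr.
  apply: (@dcoll_step _ _ K r) => //.
  + split; first exact: hRK.
    exists (r :|: t); split.
    * split; first exact: hRK. move=> t' Kt' st'; apply/eqP; rewrite eqEsubset st' andbT.
      by case: (hup _ _ Rrt st' Kt') => _ [].
    * exact: subsetUl.
    * move=> t' [Kt' mt'] rt'. have [_ [st' _]] := hup _ _ Rr rt' Kt'.
      symmetry; exact: mt' _ (hRK _ Rrt) st'.
  + have -> : coll K r = (fun J => K J /\ ~ Rset H r t J) => //.
    apply: cplx_eq => J; split=> [[kj nr]|[kj nR]]; split=> //.
    * by move=> [].
    * move=> rJ; apply: nR; exact: hup _ _ Rr rJ kj.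
- have eR : forall J, Rset H r t J <-> Rset H (a |: r) (t :\ a) J \/ Rset H r (t :\ a) J.
    move=> J; split.
    + move=> [rJ [Jrt hm]]; case aJ: (a \in J).
      * left; split; first by rewrite subUset sub1set aJ rJ.
        split=> //; apply/subsetP=> x xJ; move/subsetP: Jrt => /(_ x xJ).
        rewrite !inE; case: (x =P a) => [->|]//=.
      * right; split=> //; split=> //; apply/subsetP=> x xJ; move/subsetP: Jrt => /(_ x xJ).
        rewrite !inE; case: (x =P a) => [e|]//=; by rewrite -e xJ in aJ.
    + move=> [[rJ [Jrt hm]]|[rJ [Jrt hm]]]; (split; last split) => //.
      * apply: subset_trans rJ; exact: subsetUr.
      * apply: subset_trans Jrt _; apply/subsetP=> x; rewrite !inE.
        case: (x =P a) => [->|]//=; by rewrite at_ orbT.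
      * apply: subset_trans Jrt _; apply/subsetP=> x; rewrite !inE.
        by case/orP=> [->|/andP[_ ->]]; rewrite ?orbT.
  apply: (IH1 K).
  + move=> J h; apply: hRK; apply/eR; by left.
  + move=> J J' h sJ kJ'. have RJ' : Rset H r t J' by apply: hup sJ kJ' => //; apply/eR; left.
    case/eR: RJ' => // [[rJ' [J'rt hm]]]. case: h => /subsetP aJ _.
    move/subsetP: J'rt => /(_ a (subsetP sJ a (aJ a (setU11 _ _)))).
    by rewrite !inE eqxx (negbTE ar).
  + apply: (IH2 (fun J => K J /\ ~ Rset H (a |: r) (t :\ a) J)).
    * move=> J h; split; first by apply: hRK; apply/eR; right.
      move=> [/subsetP aJ _]; case: h => _ [/subsetP Jrt _].
      move: (Jrt a (aJ a (setU11 _ _))); by rewrite !inE eqxx (negbTE ar).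
    * move=> J J' h sJ [kJ' nR1]. have RJ' : Rset H r t J' by apply: hup sJ kJ' => //; apply/eR; right.
      by case/eR: RJ'.
    * have <- // : (fun J => K J /\ ~ Rset H r t J) =
        (fun J => (K J /\ ~ Rset H (a |: r) (t :\ a) J) /\ ~ Rset H r (t :\ a) J).
      apply: cplx_eq => J; rewrite eR; tauto.
Qed.


Lemma ok_kmono k k' H r t : ok k H r t -> k <= k' -> ok k' H r t.
Proof.
move=> h kk; elim: h => {r t}.
- move=> r t h; exact: ok_void.
- move=> r t h hk; apply: ok_none => //; exact: leq_trans hk kk.
- move=> r t a at_ ar _ h1 _ h2; exact: ok_split h1 h2.
Qed.

Lemma ok_ext k (H H' : {set I} -> Prop) r t : ok k H r t -> (forall A, H A <-> H' A) -> ok k H' r t.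
Proof.
move=> h e; elim: h => {r t}.
- move=> r t [A [HA hA]]; apply: ok_void; exists A; split=> //; exact/e.
- move=> r t h hk; apply: ok_none => // A /e; exact: h.
- move=> r t a at_ ar _ h1 _ h2; exact: ok_split h1 h2.
Qed.

Lemma card_diff (r r' : {set I}) : #|r'| <= #|r| + #|r' :\: r|.
Proof.
rewrite -(cardsID r r') leq_add2r; apply: subset_leq_card; exact: subsetIr.
Qed.

Lemma ok_mono k H r t : ok k H r t -> forall k' (r' t' : {set I}), r \subset r' -> r' :|: t' \subset r :|: t ->
  (forall x, x \in r' -> x \notin t') -> k + #|r' :\: r| <= k' -> ok k' H r' t'.
Proof.
elim=> {r t}.
- move=> r t [A [HA hA]] k' r' t' _ s _ _; apply: ok_void; exists A; split=> // j jA.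
  apply/negP=> jr; move: (hA j jA); by rewrite (subsetP s j jr).
- move=> r t h hk k' r' t' rr' _ _ kk; apply: ok_none.
  + move=> A HA; case: (h A HA) => j [jA jr]; exists j; split=> //; exact: (subsetP rr').
  + apply: leq_trans (card_diff r r') _; apply: leq_trans kk; by rewrite leq_add2r.
- move=> r t a at_ ar _ IH1 _ IH2 k' r' t' rr' s dj kk.
  move/subsetP: s => s; move/subsetP: rr' => rr'.
  case at': (a \in t').
  + have ar' : a \notin r'.
      apply/negP=> ar'; move: (dj a ar'); by rewrite at'.
    apply: (@ok_split _ _ _ _ a) => //.
    * apply: IH1; try (apply/subsetP=> x); try move=> x;
        try (move: (rr' x) (s x) (dj x) ar at_ ar' at'; rewrite ?inE; case: (x =P a) => [->|_]; bdestr).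
      apply: leq_trans kk; rewrite leq_add2l; apply: subset_leq_card.
      apply/subsetP=> x; rewrite !inE; bdestr.
    * apply: IH2; try (apply/subsetP=> x); try move=> x;
        try (move: (rr' x) (s x) (dj x) ar at_ ar' at'; rewrite ?inE; case: (x =P a) => [->|_]; bdestr).
      exact: kk.
  + case ar': (a \in r').
    * apply: IH1; try (apply/subsetP=> x); try move=> x;
        try (move: (rr' x) (s x) (dj x) ar at_ ar' at'; rewrite ?inE; case: (x =P a) => [->|_]; bdestr).
      apply: leq_trans kk; rewrite leq_add2l; apply: subset_leq_card.
      apply/subsetP=> x; rewrite !inE; bdestr.
    * apply: IH2; try (apply/subsetP=> x); try move=> x;
        try (move: (rr' x) (s x) (dj x) ar at_ ar' at'; rewrite ?inE; case: (x =P a) => [->|_]; bdestr).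
      done.
Qed.

Lemma ok_extra k (H1 H2 : {set I} -> Prop) (r t : {set I}) : ok k H2 r t -> (forall A, H1 A -> exists j, j \in A /\ j \in r) ->
  ok k (fun A => H1 A \/ H2 A) r t.
Proof.
elim=> {r t}.
- move=> r t [A [HA hA]] _; apply: ok_void; exists A; split=> //; by right.
- move=> r t h hk h1; apply: ok_none => // A [/h1|/h] //.
- move=> r t a at_ ar _ IH1 _ IH2 h1; apply: ok_split (IH1 _) (IH2 h1) => //.
  move=> A /h1 [j [jA jr]]; exists j; split=> //; by rewrite inE jr orbT.
Qed.

Lemma ok_sub k1 H1 r t : ok k1 H1 r t -> forall k2 (H2 : {set I} -> Prop) k, ok k2 H2 r t -> (forall x, x \in r -> x \notin t) ->
  k1 + k2 <= k + #|r| -> ok k (fun A => H1 A \/ H2 A) r t.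
Proof.
elim=> {r t}.
- move=> r t [A [HA hA]] k2 H2 k _ _ _; apply: ok_void; exists A; split=> //; by left.
- move=> r t h hk k2 H2 k o2 _ kk.
  have o2' : ok k H2 r t.
    apply: ok_kmono o2 _; lia.
  exact: ok_extra o2' h.
- move=> r t a at_ ar _ IH1 _ IH2 k2 H2 k o2 dj kk.
  have dj1 : (forall x, x \in r -> x \notin t :\ a).
    move=> x xr; rewrite !inE (negbTE (dj x xr)) andbF //.
  apply: (@ok_split _ _ _ _ a) => //.
  + apply: (IH1 k2.+1).
    * apply: (ok_mono o2); try (apply/subsetP=> x); try move=> x;
        try (move: (dj x) ar at_; rewrite ?inE; case: (x =P a) => [->|_]; bdestr).
      have -> : (a |: r) :\: r = [set a].
        apply/setP=> x; rewrite !inE; move: ar; case: (x =P a) => [->|_]; bdestr.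
      by rewrite cards1 addn1.
    * move=> x; move: (dj x) ar at_; rewrite ?inE; case: (x =P a) => [->|_]; bdestr.
      rewrite cardsU1 ar; lia.
  + apply: (IH2 k2) => //. apply: (ok_mono o2); try (apply/subsetP=> x); try move=> x;
        try (move: (dj x) ar at_; rewrite ?inE; case: (x =P a) => [->|_]; bdestr).
    by rewrite setDv cards0 addn0.
Qed.

End Ok.

Definition pb (P : Prop) : bool := if excluded_middle_informative P then true else false.
Lemma pbE (P : Prop) : pb P = true <-> P.
Proof. rewrite /pb; case: excluded_middle_informative => //. Qed.

Lemma In_mem (T : eqType) (x : T) (s : seq T) : List.In x s <-> x \in s.
Proof.
elim: s => [|y s IH] //=; rewrite in_cons; split.
- case=> [->|/IH ->]; by rewrite ?eqxx ?orbT.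
- case/orP=> [/eqP ->|/IH]; by [left|right].
Qed.

Lemma list_min (A : Type) (rel : A -> A -> Prop) :
  (forall a b, rel a b \/ rel b a) -> (forall a b c, rel a b -> rel b c -> rel a c) ->
  forall l x, List.In x l -> exists a, List.In a l /\ forall b, List.In b l -> rel a b.
Proof.
move=> tot tr; elim=> [|y l IH] x //= hx.
case: l IH hx => [|z l] IH hx.
- exists y; split; first by left. move=> b [<-|[]]; by case: (tot y y).
- have [a [al ha]] := IH z (or_introl erefl).
  case: (tot y a) => h.
  + exists y; split; first by left. move=> b [<-|bl]; first by case: (tot y y).
    exact: tr h (ha b bl).
  + exists a; split; first by right. move=> b [<-|bl] //; exact: ha.
Qed.

Section Intv.
Variables (I : finType) (D : I -> R -> Prop) (S : R -> Prop).

Definition HS (A : {set I}) := exists y, S y /\ forall j, j \in A <-> ~ D j y.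
Definition E (r : {set I}) y := S y /\ forall j, j \in r -> D j y.

Lemma Aset y : exists A : {set I}, forall j, j \in A <-> ~ D j y.
Proof. exists [set j | pb (~ D j y)] => j; rewrite inE; exact: pbE. Qed.

Lemma ok_none' k (r t : {set I}) : #|r| <= k -> ~ (exists y, E r y) -> ok k HS r t.
Proof.
move=> hk hE; apply: ok_none => // A [y [Sy hA]].
apply: NNPP => hn; apply: hE; exists y; split=> // j jr.
apply: NNPP => nd; apply: hn; exists j; split=> //; exact/hA.
Qed.

Lemma ok_void' k (r t : {set I}) y : E r y -> (forall j, j \in t -> D j y) -> ok k HS r t.
Proof.
move=> [Sy hr] ht; have [A hA] := Aset y; apply: ok_void; exists A; split.
- exists y; split=> //.
- move=> j /hA nd; rewrite inE; apply/negP => /orP [/hr|/ht] //.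
Qed.

Lemma max_pt (l : list I) (P : R -> Prop) : (forall a, List.In a l -> exists y, P y /\ D a y) ->
  (exists y0, P y0) -> exists ys, P ys /\ forall a, List.In a l -> exists y, P y /\ D a y /\ Rle y ys.
Proof.
elim: l => [|b l IH] h [y0 Py0].
- exists y0; split=> // a [].
- have [ys [Pys hys]] := IH (fun a al => h a (or_intror al)) (ex_intro _ y0 Py0).
  have [yb [Pyb Db]] := h b (or_introl erefl).
  case: (Rle_or_lt yb ys) => hle.
  + exists ys; split=> // a [<-|al]; first by exists yb.
    exact: hys.
  + exists yb; split=> // a [<-|al]; first by exists yb; split=> //; split=> //; apply: Rle_refl.
    have [y [Py [Dy yle]]] := hys a al; exists y; split=> //; split=> //.
    apply: Rle_trans yle _; apply: Rlt_le.
    done.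
Qed.

Definition nested (r t : {set I}) := forall j, j \in t -> forall y y', E r y -> E r y' -> Rle y y' -> D j y -> D j y'.

Lemma L1 n : forall (r t : {set I}), #|t| <= n -> (forall x, x \in r -> x \notin t) -> nested r t ->
  ok (#|r| + 1) HS r t.
Proof.
elim: n => [|n IH] r t ht dj hn.
- have t0 : t = set0 by apply/eqP; rewrite -cards_eq0 -leqn0.
  case: (classic (exists y, E r y)) => [[y Ey]|nE].
  + apply: (@ok_void' _ r t y Ey) => j; by rewrite t0 inE.
  + apply: (@ok_none' _ r t _ nE); exact: leq_addr.
case: (classic (exists y, E r y)) => [[y0 Ey0]|nE]; last by apply: (@ok_none' _ r t _ nE); exact: leq_addr.
case: (classic (exists a, a \in t /\ forall y, E r y -> ~ D a y)) => [[a [at_ ha]]|nA].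
- have ar : a \notin r by apply/negP => /dj; rewrite at_.
  apply: (@ok_split _ _ _ _ _ a) => //.
  + apply: ok_none'; first by rewrite cardsU1 ar addnC.
    move=> [y [Sy hy]]; apply: (ha y); last by apply: hy; rewrite setU11.
    split=> // j jr; apply: hy; by rewrite inE jr orbT.
  + apply: IH.
    * move: ht; rewrite (cardsD1 a t) at_ add1n ltnS //.
    * move=> x xr; rewrite inE (negbTE (dj x xr)) andbF //.
    * move=> j; rewrite inE => /andP [_ jt]; exact: hn.
- have h : forall a, List.In a (enum t) -> exists y, E r y /\ D a y.
    move=> a /In_mem; rewrite mem_enum => at_.
    apply: NNPP => hn'; apply: nA; exists a; split=> // y Ey Da; apply: hn'; by exists y.
  have [ys [Eys hys]] := max_pt h (ex_intro _ y0 Ey0).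
  apply: (@ok_void' _ r t ys Eys) => j jt.
  have [y [Ey [Dy yle]]] := hys j (proj2 (In_mem _ _) (etrans (mem_enum _ _) jt)).
  exact: hn jt y ys Ey Eys yle Dy.
Qed.


Lemma L2 (hconv : forall j, convex (D j)) n : forall (r t : {set I}), #|t| <= n ->
  (forall x, x \in r -> x \notin t) -> ok (#|r| + 2) HS r t.
Proof.
elim: n => [|n IH] r t ht dj.
- have t0 : t = set0 by apply/eqP; rewrite -cards_eq0 -leqn0.
  case: (classic (exists y, E r y)) => [[y Ey]|nE].
  + apply: (@ok_void' _ r t y Ey) => j; by rewrite t0 inE.
  + apply: (@ok_none' _ r t _ nE); exact: leq_addr.
case: (set_0Vmem t) => [t0|[a0 a0t]].
- case: (classic (exists y, E r y)) => [[y Ey]|nE].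
  + apply: (@ok_void' _ r t y Ey) => j; by rewrite t0 inE.
  + apply: (@ok_none' _ r t _ nE); exact: leq_addr.
pose pre a b := forall y, E r y -> D a y -> exists z, E r z /\ D b z /\ Rle y z.
have tot : forall a b, pre a b \/ pre b a.
  move=> a b; case: (classic (pre a b)) => h; [by left|right].
  have [y hy] := not_all_ex_not _ _ h.
  have [Ey [Da hz]] : E r y /\ D a y /\ forall z, E r z -> D b z -> Rlt z y.
    apply: NNPP => hn; apply: hy => Ey Da; apply: NNPP => hn2; apply: hn; split=> //; split=> //.
    move=> z Ez Dz; case: (Rlt_or_le z y) => // hle; exfalso; apply: hn2; by exists z.
  move=> y' Ey' Db; exists y; split=> //; split=> //; apply: Rlt_le; exact: hz.
have tr : forall a b c, pre a b -> pre b c -> pre a c.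
  move=> a b c hab hbc y Ey Da; have [z [Ez [Db yz]]] := hab y Ey Da.
  have [z' [Ez' [Dc zz']]] := hbc z Ez Db; exists z'; split=> //; split=> //; exact: Rle_trans yz zz'.
have [a [al ha]] := list_min tot tr (proj2 (In_mem _ _) (etrans (mem_enum _ _) a0t)).
have at_ : a \in t by move/In_mem: al; rewrite mem_enum.
have ar : a \notin r by apply/negP => /dj; rewrite at_.
apply: (@ok_split _ _ _ _ _ a) => //.
- have -> : #|r| + 2 = #|a |: r| + 1 by rewrite cardsU1 ar; lia.
  apply: (L1 (n := #|t :\ a|)) => //.
  + move=> x; rewrite !inE; case: (x =P a) => [->|_] //= xr; by rewrite (negbTE (dj x xr)).
  + move=> j; rewrite inE => /andP [_ jt] y y' [Sy hy] [Sy' hy'] yy' Dy.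
    have Ea : forall y, (forall j, j \in a |: r -> D j y) -> D a y /\ (forall j, j \in r -> D j y).
      move=> z hz; split; first by apply: hz; rewrite setU11.
      move=> i ir; apply: hz; by rewrite inE ir orbT.
    have [Da' hr'] := Ea y' hy'.
    have [z [Ez [Dz y'z]]] := ha j (proj2 (In_mem _ _) (etrans (mem_enum _ _) jt)) y' (conj Sy' hr') Da'.
    exact: hconv j y z y' Dy Dz yy' y'z.
- apply: IH.
  + move: ht; rewrite (cardsD1 a t) at_ add1n ltnS //.
  + move=> x xr; rewrite inE (negbTE (dj x xr)) andbF //.
Qed.

End Intv.

Section Main.
Variables (d : nat) (hd : 1 <= d) (I : finType).

Definition Fam (L : list (I * pt d)) : I -> pt d -> Prop := fun i p => List.In (i, p) L.

Definition p0 : pt d := (R0, Ordinal hd).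

Lemma coll_empty k : d_collapsible k (nerve (Fam nil)).
Proof.
have hup : forall J J' : {set I}, Rset (fun _ => False) set0 set0 J -> J \subset J' ->
    nerve (Fam nil) J' -> Rset (fun _ => False) set0 set0 J'.
  move=> J J' _ _ [w hw]; split; first exact: sub0set.
  split; last by [].
  apply/subsetP=> j jJ; by case: (hw j jJ).
apply: (lemG (@ok_none I k (fun _ => False) set0 set0 _ _)) (hup) _ => //.
- by rewrite cards0.
- move=> J [_ [sJ _]]; exists p0 => j jJ; move/subsetP: sJ => /(_ j jJ); by rewrite !inE.
- apply: dcoll_empty => J [[w hw] nR]; apply: nR; apply: (hup set0) => //.
  + split; first exact: sub0set. split; by [rewrite setU0 subxx|].
  + exact: sub0set.
  + by exists w.
Qed.


Definition pdec : forall a b : I * pt d, {a = b} + {a <> b} := fun a b => excluded_middle_informative (a = b).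

Lemma main (P' : pt d -> Prop) n : forall L : list (I * pt d), (length L <= n)%coq_nat ->
  (forall i, in_C_equiv P' (Fam L i)) -> d_collapsible (2 * d - 1) (nerve (Fam L)).
Proof.
elim: n => [|n IHn] L hlen hC.
  case: L hlen hC => [|q L] hlen hC; first exact: coll_empty.
  by move: hlen => /= ; lia.
case: L hlen hC => [|q0 L0] hlen hC; first exact: coll_empty.
set L := q0 :: L0.
have q0L : List.In q0 L by left.
pose l := q0.2.2.
have [lv hlv] : exists lv : I -> 'I_d -> R -> Prop, forall j,
    (forall m, convex (lv j m)) /\ forall p, Fam L j p <-> lv j p.2 p.1 /\ P' p.
  exists (fun j => proj1_sig (constructive_indefinite_description _ (hC j))) => j.
  exact: (proj2_sig (constructive_indefinite_description _ (hC j))).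
have [qx [qxL qxmin]] : exists qx, List.In qx (List.filter (fun q => q.2.2 == l) L) /\
    forall q, List.In q (List.filter (fun q => q.2.2 == l) L) -> Rle qx.2.1 q.2.1.
  apply: (list_min (rel := fun q q' : I * pt d => Rle q.2.1 q'.2.1)) => //.
  - move=> a b; case: (Rle_or_lt a.2.1 b.2.1) => h; [by left|right; exact: Rlt_le].
  - move=> a b c; exact: Rle_trans.
  - apply/List.filter_In; split; [exact: q0L | exact: eqxx].
pose x := qx.2.
have [i0x xl] : List.In (qx.1, x) L /\ x.2 = l.
  case/List.filter_In: qxL => h /eqP e; split=> //; rewrite /x; by case: (qx) h e.
have xmin : forall j y, List.In (j, y) L -> y.2 = l -> Rle x.1 y.1.
  move=> j y h e; apply: (qxmin (j, y)); apply/List.filter_In; split=> //; exact/eqP.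
have [qi [qiL qimin]] : exists qi, List.In qi (List.filter (fun q => pb (q.2 = x)) L) /\
    forall q, List.In q (List.filter (fun q => pb (q.2 = x)) L) ->
      forall y, List.In (qi.1, y) L -> y.2 = l -> exists z, List.In (q.1, z) L /\ z.2 = l /\ Rle y.1 z.1.
  apply: (list_min (rel := fun q q' : I * pt d => forall y, List.In (q.1, y) L -> y.2 = l ->
      exists z, List.In (q'.1, z) L /\ z.2 = l /\ Rle y.1 z.1)).
  - move=> a b; case: (classic (forall y, List.In (a.1, y) L -> y.2 = l ->
      exists z, List.In (b.1, z) L /\ z.2 = l /\ Rle y.1 z.1)) => h; [by left|right].
    have [y hy] := not_all_ex_not _ _ h.
    have [yL [yl hz]] : List.In (a.1, y) L /\ y.2 = l /\ forall z, List.In (b.1, z) L -> z.2 = l -> Rlt z.1 y.1.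
      apply: NNPP => hn; apply: hy => yL yl; apply: NNPP => hn2; apply: hn; split=> //; split=> //.
      move=> z zL zl; case: (Rlt_or_le z.1 y.1) => // hle; exfalso; apply: hn2; by exists z.
    move=> y' y'L y'l; exists y; split=> //; split=> //; apply: Rlt_le; exact: hz.
  - move=> a b c hab hbc y yL yl; have [z [zL [zl yz]]] := hab y yL yl.
    have [z' [z'L [z'l zz']]] := hbc z zL zl; exists z'; split=> //; split=> //; exact: Rle_trans yz zz'.
  - apply/List.filter_In; split; first exact: i0x. exact/pbE.
pose i := qi.1.
have iL : List.In (i, x) L.
  case/List.filter_In: qiL => h /pbE e; rewrite /i -e; by case: (qi) h.
have imin : forall j, List.In (j, x) L -> forall y, List.In (i, y) L -> y.2 = l ->
    exists z, List.In (j, z) L /\ z.2 = l /\ Rle y.1 z.1.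
  move=> j jL; apply: (qimin (j, x)); apply/List.filter_In; split=> //; exact/pbE.
have levl : forall j y, List.In (j, x) L -> List.In (i, y) L -> y.2 = l -> List.In (j, y) L.
  move=> j y jx iy yl; have [z [zL [zl yz]]] := imin j jx y iy yl.
  have xy := xmin _ _ iy yl.
  have [hcj hFj] := hlv j; have [_ hFi] := hlv i.
  apply/hFj; split; last by case/hFi: iy.
  have [lx _] := (proj1 (hFj x) jx); have [lz _] := (proj1 (hFj z) zL).
  rewrite yl; rewrite xl in lx; rewrite zl in lz.
  exact: hcj l _ _ _ lx lz xy yz.
pose L' := List.remove pdec (i, x) L.
have hL' : forall j p, Fam L' j p <-> Fam L j p /\ (j, p) <> (i, x).
  move=> j p; split; [exact: List.in_remove | case=> h1 h2; exact: List.in_in_remove].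
have hC' : forall j, in_C_equiv P' (Fam L' j).
  move=> j; have [hcj hFj] := hlv j.
  exists (fun m r => lv j m r /\ (j = i -> m = l -> Rlt x.1 r)); split.
  - move=> m a b c [la ha] [lb hb] ac cb; split; first exact: hcj m a b c la lb ac cb.
    move=> ji ml; apply: Rlt_le_trans (ha ji ml) ac.
  - move=> p; rewrite /d_interval_of hL' hFj; split.
    + move=> [[lp Pp] ne]; split=> //; split=> // ji pl.
      have jL : Fam L j p by apply/hFj.
      rewrite ji in jL; have := xmin _ _ jL pl; case/Rle_lt_or_eq => // e.
      exfalso; apply: ne; rewrite ji.
      by rewrite (surjective_pairing p) (surjective_pairing x) -e pl xl.
    + move=> [[lp hp] Pp]; split=> //; move=> [ji px].
      have := hp ji; rewrite px xl => /(_ erefl); exact: Rlt_irrefl.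
have IH : d_collapsible (2 * d - 1) (nerve (Fam L')).
  apply: IHn hC'; have := List.remove_length_lt pdec L (i, x) iL; rewrite -/L' => h.
  move: hlen; rewrite -/L; lia.
pose Jx := [set j | pb (Fam L j x)].
have subJx : forall J : {set I}, J \subset [set i] :|: (Jx :\ i) <-> forall j, j \in J -> Fam L j x.
  move=> J; split.
  - move/subsetP=> h j /h; rewrite !inE; case/orP=> [/eqP -> //|/andP [_ /pbE] //].
  - move=> h; apply/subsetP=> j jJ; rewrite !inE; have /pbE -> := h j jJ.
    by case: (j == i).
pose H := fun A : {set I} => exists y, Fam L i y /\ y <> x /\ forall j, j \in A <-> ~ Fam L j y.
have Aw : forall w, Fam L i w -> w <> x -> H [set j | pb (~ Fam L j w)].
  move=> w iw wx; exists w; split=> //; split=> // j; rewrite inE; exact: pbE.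
have G1 : ok (2 * d - 1) H [set i] (Jx :\ i).
  have dj : forall z, z \in [set i] -> z \notin Jx :\ i.
    move=> z; rewrite !inE => /eqP ->; by rewrite eqxx.
  pose Hm (m : 'I_d) := fun A : {set I} => exists y, Fam L i y /\ y <> x /\ y.2 = m /\
    forall j, j \in A <-> ~ Fam L j y.
  have ok1 : ok 1 (Hm l) [set i] (Jx :\ i).
    case: (classic (exists y, Fam L i y /\ y <> x /\ y.2 = l)) => [[y [iy [yx yl]]]|hn].
    - apply: ok_void; exists [set j | pb (~ Fam L j y)]; split.
      + exists y; do 3!split=> //. move=> j; rewrite inE; exact: pbE.
      + move=> j; rewrite inE => /pbE nj; apply/negP => hj; apply: nj.
        apply: levl => //; apply: ((proj1 (subJx [set j])) _ j (set11 j)).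
        by rewrite sub1set.
    - apply: ok_none; last by rewrite cards1.
      move=> A [y [iy [yx [yl _]]]]; exfalso; apply: hn; by exists y.
  have okm : forall m, m != l -> ok 3 (Hm m) [set i] (Jx :\ i).
    move=> m ml.
    have := @L2 I (fun j r => lv j m r) (fun r => Fam L i (r, m)) (fun j => proj1 (hlv j) m)
      #|Jx :\ i| [set i] (Jx :\ i) (leqnn _) dj.
    rewrite cards1 => o; apply: (ok_ext o) => A; split.
    - move=> [y [Sy hA]]; exists (y, m); split=> //; split.
      + move=> e; move: ml; by rewrite -xl -e eqxx.
      split=> // j; rewrite hA; have [_ hFi] := hlv i; have [_ hFj] := hlv j.
      have [_ Pp] := proj1 (hFi _) Sy; rewrite hFj /=; tauto.
    - move=> [[y m'] [Sy [yx [/= ym hA]]]]; rewrite ym in Sy hA; exists y; split=> //.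
      move=> j; rewrite hA; have [_ hFi] := hlv i; have [_ hFj] := hlv j.
      have [_ Pp] := proj1 (hFi _) Sy; rewrite hFj /=; tauto.
  have comb : forall ms : seq 'I_d, (forall m, m \in ms -> m != l) ->
      ok (1 + 2 * size ms) (fun A => Hm l A \/ exists m, m \in ms /\ Hm m A) [set i] (Jx :\ i).
    elim=> [|m ms IHms] hms.
    - apply: (ok_ext ok1) => A; split; first by left. by case=> // [[m []]].
    - have hms' : forall m', m' \in ms -> m' != l.
        move=> m' hm'; apply: hms; by rewrite in_cons hm' orbT.
      have o := @ok_sub _ _ _ _ _ (okm m (hms m (mem_head _ _))) _ _ (1 + 2 * size (m :: ms))
        (IHms hms') dj.
      rewrite cards1 /= in o; have {}o := o ltac:(lia).
      apply: (ok_ext o) => A; split.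
      + case=> [hA|[hA|[m' [m'ms hA]]]].
        * right; exists m; split=> //; exact: mem_head.
        * by left.
        * right; exists m'; split=> //; by rewrite in_cons m'ms orbT.
      + case=> [hA|[m' [m'ms hA]]]; first by right; left.
        move: m'ms; rewrite in_cons => /orP [/eqP e|m'ms]; first by left; rewrite -e.
        right; right; by exists m'.
  have := comb (enum [set~ l]) ltac:(move=> m; by rewrite mem_enum !inE).
  rewrite -cardE cardsC1 card_ord => o.
  have {}o : ok (2 * d - 1) (fun A => Hm l A \/ exists m, m \in enum [set~ l] /\ Hm m A) [set i] (Jx :\ i).
    by move: o; have -> : 1 + 2 * d.-1 = 2 * d - 1 by lia.
  apply: (ok_ext o) => A; split.
  - case=> [[y [iy [yx [_ hA]]]]|[m [_ [y [iy [yx [_ hA]]]]]]]; by exists y.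
  - move=> [y [iy [yx hA]]]; case: (y.2 =P l) => [yl|yl].
    + left; by exists y.
    + right; exists y.2; split; first by rewrite mem_enum !inE; apply/eqP.
      by exists y.
apply: (lemG G1).
- move=> J [_ [/subJx sJ _]]; by exists x.
- move=> J J' [iJ [sJ hm]] JJ' [w hw]; split; first exact: subset_trans iJ JJ'.
  have iw : Fam L i w by apply: hw; apply: (subsetP JJ'); apply: (subsetP iJ); rewrite inE.
  case: (classic (w = x)) => [wx|wx].
  + split; first by apply/subJx => j /hw; rewrite wx.
    move=> A /hm [j [jA jJ]]; exists j; split=> //; exact: (subsetP JJ').
  + have [j [jA jJ]] := hm _ (Aw w iw wx).
    move: jA; rewrite inE => /pbE; case; apply: hw; exact: (subsetP JJ').
- have -> // : (fun J => nerve (Fam L) J /\ ~ Rset H [set i] (Jx :\ i) J) = nerve (Fam L').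
  apply: cplx_eq => J; split.
  + move=> [[w hw] nR].
    case: (classic (i \in J /\ w = x)) => [[iJ wx]|hn].
    * have : ~ (forall A, H A -> exists j, j \in A /\ j \in J).
        move=> hm; apply: nR; split; first by rewrite sub1set.
        split=> //; apply/subJx => j /hw; by rewrite wx.
      move=> nm; have [A [HA hA]] : exists A, H A /\ forall j, j \in J -> j \notin A.
        apply: NNPP => hn; apply: nm => A HA; apply: NNPP => hn2; apply: hn; exists A; split=> //.
        move=> j jJ; apply/negP => jA; apply: hn2; by exists j.
      have [y [iy [yx hy]]] := HA.
      exists y => j jJ; apply/hL'; split.
      - apply: NNPP => nj; move: (hA j jJ); by move/hy: nj => ->.
      - by case.
    * exists w => j jJ; apply/hL'; split; first exact: hw.
      case=> ji wx; apply: hn; by rewrite -ji.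
  + move=> [w hw]; split.
    * exists w => j /hw /hL' []; done.
    * move=> [iJ [_ hm]]; rewrite sub1set in iJ; have /hL' [iw nix] := hw i iJ.
      have wx : w <> x by move=> e; apply: nix; rewrite e.
      have [j [jA jJ]] := hm _ (Aw w iw wx).
      move: jA; rewrite inE => /pbE; case; by case/hL': (hw j jJ).
Qed.

End Main.

Theorem theorem3 (d : nat) (hd : 1 <= d) (P : pt d -> Prop)
  (I : finType) (C : I -> pt d -> Prop)
  (hinj : injective C)
  (hC : forall i, in_C_equiv P (C i)) :
  d_collapsible (2 * d - 1) (nerve C).
Proof.
pose wit (J : {set I}) : pt d :=
  match excluded_middle_informative (nerve C J) with
  | left h => proj1_sig (constructive_indefinite_description _ h)
  | right _ => p0 hd end.
have witP : forall J, nerve C J -> forall j, j \in J -> C j (wit J).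
  move=> J h; rewrite /wit; case: excluded_middle_informative => // h'.
  exact: (proj2_sig (constructive_indefinite_description _ h')).
pose L := List.flat_map (fun J => List.map (fun i => (i, wit J))
            (List.filter (fun i => pb (C i (wit J))) (enum [set: I]))) (enum [set: {set I}]).
have hL : forall i p, Fam L i p <-> C i p /\ exists J, p = wit J.
  move=> i p; rewrite /Fam List.in_flat_map; split.
  - move=> [J [_ /List.in_map_iff [i' [[<- <-] /List.filter_In [_ /pbE h]]]]].
    split=> //; by exists J.
  - move=> [h [J e]]; exists J; split; first by apply/In_mem; rewrite mem_enum inE.
    apply/List.in_map_iff; exists i; split; first by rewrite e.
    apply/List.filter_In; split; first by apply/In_mem; rewrite mem_enum inE.
    apply/pbE; by rewrite -e.
have -> : nerve C = nerve (Fam L).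
  apply: cplx_eq => J; split.
  - move=> h; exists (wit J) => j jJ; apply/hL; split; last by exists J.
    exact: witP.
  - move=> [w hw]; exists w => j /hw /hL []; done.
apply: (@main d hd I (fun p => P p /\ exists J, p = wit J) (length L) L (le_n _)).
move=> i; have [lvl [hc he]] := hC i; exists lvl; split=> // p.
rewrite hL he; tauto.
Qed.
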